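(* Let $n\in\mathbb{N}$ and $c=(c_0,\dots,c_n)\in\mathbb{C}^{n+1}$ with $c_n=1$. Then for every $\omega\in\mathscr{C}^n(\mathbb{R})$ with $D_c(\omega)=0$ and for all $u,v\in\mathbb{R}$, \[ \omega(u+v)=\sum_{j=0}^{n-1}\sum_{i=0}^{n-1-j}c_{i+j+1}\,\omega_c^{(i)}(u)\,\omega^{(j)}(v). \]
   Context: For an open interval $J\subseteq\mathbb{R}$, $\mathscr{C}^n(J)$ denotes the space of $n$ times continuously differentiable complex-valued functions on $J$. For $c=(c_0,\dots,c_n)\in\mathbb{C}^{n+1}$ with $c_n=1$, the differential operator $D_c$ is defined by $D_c(f):=c_nf^{(n)}+\dots+c_1f'+c_0f$ for $f\in\mathscr{C}^n(J)$. The characteristic solution $\omega_c\colon\mathbb{R}\to\mathbb{C}$ is the unique solution of the initial value problem $D_c(\omega_c)=0$, $\omega_c^{(k)}(0)=\delta_{k,n-1}$ for $k\in\{0,\dots,n-1\}$ ($\delta$ is the Kronecker delta). *)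

(* Defs.v *)
From Stdlib Require Import Reals.
From Coquelicot Require Import Coquelicot.
Open Scope C_scope.

Fixpoint csum (N : nat) (f : nat -> C) : C :=
  match N with
  | O => 0
  | S k => csum k f + f k
  end.

Definition CDerive (f : R -> C) : R -> C :=
  fun x => (Derive (fun t => fst (f t)) x, Derive (fun t => snd (f t)) x).

Fixpoint CDerive_n (k : nat) (f : R -> C) : R -> C :=
  match k with
  | O => f
  | S k' => CDerive (CDerive_n k' f)
  end.

Definition Cn (n : nat) (f : R -> C) : Prop :=
  (forall k x, (k < n)%nat -> ex_derive (CDerive_n k f) x) /\
  (forall k x, (k <= n)%nat -> continuous (CDerive_n k f) x).

Definition Dc (n : nat) (c : nat -> C) (f : R -> C) : R -> C :=
  fun x => csum (S n) (fun k => c k * CDerive_n k f x).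

(* w is the characteristic solution omega_c: the solution in C^n(R) of
   D_c(w) = 0 with w^(k)(0) = delta_{k,n-1} for k in {0,...,n-1} *)
Definition is_char_solution (n : nat) (c : nat -> C) (w : R -> C) : Prop :=
  Cn n w /\ (forall x, Dc n c w x = 0) /\
  (forall k, (k < n)%nat ->
     CDerive_n k w 0%R = (if Nat.eqb k (n - 1) then 1 else 0)).

(* Main.v *)
Require Import Defs.
From Stdlib Require Import Reals Lia Lra.
From Coquelicot Require Import Coquelicot.
Open Scope C_scope.

Lemma is_derive_fst (f : R -> C) x l : is_derive f x l -> is_derive (fun t => fst (f t)) x (fst l).
Proof.
  intros H. unfold is_derive in *.
  eapply filterdiff_ext_lin.
  - apply (filterdiff_comp' f (fun t : prod_NormedModule R_AbsRing R_NormedModule R_NormedModule => fst t) x _ (fun t : prod_NormedModule R_AbsRing R_NormedModule R_NormedModule => fst t) H).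
    apply filterdiff_linear. apply is_linear_fst.
  - intros y. reflexivity.
Qed.
Lemma is_derive_snd (f : R -> C) x l : is_derive f x l -> is_derive (fun t => snd (f t)) x (snd l).
Proof.
  intros H. unfold is_derive in *.
  eapply filterdiff_ext_lin.
  - apply (filterdiff_comp' f (fun t : prod_NormedModule R_AbsRing R_NormedModule R_NormedModule => snd t) x _ (fun t : prod_NormedModule R_AbsRing R_NormedModule R_NormedModule => snd t) H).
    apply filterdiff_linear. apply is_linear_snd.
  - intros y. reflexivity.
Qed.

Definition cd (f : R -> C) (x : R) (l : C) :=
  is_derive (fun t => fst (f t)) x (fst l) /\ is_derive (fun t => snd (f t)) x (snd l).

Lemma isd_val (f : R -> R) x l l' : is_derive f x l -> l = l' -> is_derive f x l'.
Proof. intros H ->; exact H. Qed.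

Lemma cd_val f x l l' : cd f x l -> l = l' -> cd f x l'.
Proof. intros H ->; exact H. Qed.

Lemma cd_ext f g x l : (forall t, f t = g t) -> cd f x l -> cd g x l.
Proof.
  intros E [H1 H2]; split; eapply is_derive_ext; try eassumption; intros t; simpl; rewrite E; reflexivity.
Qed.

Lemma cd_of_Cn k f x : ex_derive (CDerive_n k f) x -> cd (CDerive_n k f) x (CDerive_n (S k) f x).
Proof.
  intros [l H]. change (CDerive_n (S k) f x) with (CDerive (CDerive_n k f) x). unfold CDerive at 1. simpl.
  split.
  - pose proof (is_derive_fst _ _ _ H) as H1.
    replace (Derive _ x) with (fst l) by (symmetry; apply (is_derive_unique _ _ _ H1)). exact H1.
  - pose proof (is_derive_snd _ _ _ H) as H1.
    replace (Derive (fun t => snd (CDerive_n k f t)) x) with (snd l) by (symmetry; apply (is_derive_unique _ _ _ H1)). exact H1.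
Qed.

Lemma cd_const a x : cd (fun _ => a) x 0.
Proof. split; (eapply isd_val; [apply is_derive_const|reflexivity]). Qed.

Lemma cd_plus f g x a b : cd f x a -> cd g x b -> cd (fun t => f t + g t) x (a + b).
Proof.
  intros [H1 H2] [H3 H4]; split; simpl.
  - apply (is_derive_plus _ _ _ _ _ H1 H3).
  - apply (is_derive_plus _ _ _ _ _ H2 H4).
Qed.

Lemma cd_mult f g x a b : cd f x a -> cd g x b -> cd (fun t => f t * g t) x (a * g x + f x * b).
Proof.
  intros [H1 H2] [H3 H4]; split; simpl.
  - eapply is_derive_ext; [|eapply isd_val].
    2: { apply is_derive_minus; [apply (is_derive_mult _ _ _ _ _ H1 H3)|apply (is_derive_mult _ _ _ _ _ H2 H4)]; intros; apply Rmult_comm. }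
    + intros t; unfold minus, plus, opp, mult; simpl. ring.
    + unfold minus, plus, opp, mult; simpl. ring.
  - eapply is_derive_ext; [|eapply isd_val].
    2: { apply is_derive_plus; [apply (is_derive_mult _ _ _ _ _ H1 H4)|apply (is_derive_mult _ _ _ _ _ H2 H3)]; intros; apply Rmult_comm. }
    + intros t; unfold minus, plus, opp, mult; simpl. ring.
    + unfold minus, plus, opp, mult; simpl. ring.
Qed.

Lemma cd_cmult f x a l : cd f x l -> cd (fun t => a * f t) x (a * l).
Proof.
  intros H. eapply cd_val. apply (cd_mult _ _ _ _ _ (cd_const a x) H). ring.
Qed.

Lemma isd_opp_arg (f : R -> R) s x l : is_derive f (s - x)%R l -> is_derive (fun t => f (s - t)%R) x (- l)%R.
Proof.
  intros H.
  assert (Hg : is_derive (fun t : R => (s - t)%R) x (-1)%R).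
  { eapply isd_val. apply (is_derive_minus (fun _ => s) (fun t => t)).
    apply is_derive_const. apply is_derive_id. unfold minus, plus, opp, zero, one; simpl. ring. }
  eapply isd_val. apply (is_derive_comp f (fun t => (s - t)%R) x l (-1)%R H Hg).
  unfold scal; simpl; unfold mult; simpl. ring.
Qed.

Lemma cd_opp_arg f s x l : cd f (s - x)%R l -> cd (fun t => f (s - t)%R) x (- l).
Proof.
  intros [H1 H2]; split; simpl; apply (isd_opp_arg (fun t => _ (f t))); assumption.
Qed.

Lemma cd_csum N (f : nat -> R -> C) (f' : nat -> C) x :
  (forall i, (i < N)%nat -> cd (f i) x (f' i)) ->
  cd (fun t => csum N (fun i => f i t)) x (csum N f').
Proof.
  induction N; intros H; simpl.
  - apply cd_const.
  - apply cd_plus. apply IHN. intros; apply H; lia. apply H; lia.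
Qed.

Lemma isd_zero_const (g : R -> R) a b : (forall x, is_derive g x 0%R) -> g a = g b.
Proof.
  intros H.
  assert (K : forall a b, (a < b)%R -> g a = g b).
  { intros a0 b0 Hab.
    destruct (MVT_cor2 g (fun _ => 0%R) a0 b0 Hab) as [c0 [E _]].
    { intros; apply is_derive_Reals; apply H. }
    lra. }
  destruct (Rtotal_order a b) as [h|[h|h]].
  - apply K; exact h.
  - subst; reflexivity.
  - symmetry; apply K; exact h.
Qed.

Lemma cd_zero_const F a b : (forall x, cd F x 0) -> F a = F b.
Proof.
  intros H. apply injective_projections.
  - apply (isd_zero_const (fun t => fst (F t))). intros x; apply (H x).
  - apply (isd_zero_const (fun t => snd (F t))). intros x; apply (H x).
Qed.

Lemma csum_ext N f g : (forall i, (i < N)%nat -> f i = g i) -> csum N f = csum N g.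
Proof.
  induction N; intros H; simpl; [reflexivity|].
  rewrite IHN by (intros; apply H; lia). rewrite H by lia. reflexivity.
Qed.

Lemma csum_plus N f g : csum N (fun i => f i + g i) = csum N f + csum N g.
Proof. induction N; simpl; [ring|]. rewrite IHN. ring. Qed.

Lemma csum_scal N a f : csum N (fun i => a * f i) = a * csum N f.
Proof. induction N; simpl; [ring|]. rewrite IHN. ring. Qed.

Lemma csum_mult_r N a f : csum N f * a = csum N (fun i => f i * a).
Proof. induction N; simpl; [ring|]. rewrite <- IHN. ring. Qed.

Lemma csum_shift N f : csum (S N) f = f 0%nat + csum N (fun i => f (S i)).
Proof. induction N; simpl in *; [ring|]. rewrite IHN. ring. Qed.

Lemma csum_tel N a : csum N (fun j => a j - a (S j)) = a 0%nat - a N.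
Proof. induction N; simpl; [ring|]. rewrite IHN. ring. Qed.

Lemma csum_zero N (f : nat -> C) : (forall i, (i < N)%nat -> f i = 0) -> csum N f = 0.
Proof.
  intros H. rewrite (csum_ext N f (fun _ => 0) H). clear H.
  induction N; simpl; [reflexivity|]. rewrite IHN. ring.
Qed.

Lemma Cplus_eq0 (a b : C) : a + b = 0 -> b = - a.
Proof. intros H. replace b with ((a + b) - a) by ring. rewrite H. ring. Qed.

Lemma Dc_shift n c f x : Dc n c f x = 0 ->
  csum n (fun k => c (S k) * CDerive_n (S k) f x) = - (c 0%nat * f x).
Proof.
  unfold Dc. rewrite csum_shift. intros H. apply Cplus_eq0 in H. exact H.
Qed.

Theorem mainTheorem1 (n : nat) (c : nat -> C) (hc : c n = 1)
  (wc : R -> C) (Hwc : is_char_solution n c wc)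
  (w : R -> C) (Hw : Cn n w) (HD : forall x, Dc n c w x = 0)
  (u v : R) :
  w (u + v)%R =
  csum n (fun j =>
    csum (n - j) (fun i =>
      c (i + j + 1)%nat * CDerive_n i wc u * CDerive_n j w v)).
Proof.
  destruct n as [|m].
  - simpl. specialize (HD (u + v)%R). unfold Dc in HD. simpl in HD.
    rewrite hc in HD. rewrite <- HD. ring.
  - set (n := S m) in *.
    destruct Hwc as [[Dwc _] [HDwc Iwc]].
    destruct Hw as [Dw _].
    set (s := (u + v)%R).
    set (G := fun j t => csum (n - j) (fun i => c (i + j + 1)%nat * CDerive_n i wc t)).
    set (H := fun j t => csum (n - j) (fun i => c (i + j + 1)%nat * CDerive_n (S i) wc t)).
    set (F := fun t => csum n (fun j => G j t * CDerive_n j w (s - t)%R)).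
    assert (E1 : csum n (fun j => csum (n - j) (fun i =>
      c (i + j + 1)%nat * CDerive_n i wc u * CDerive_n j w v)) = F u).
    { unfold F, G. replace (s - u)%R with v by (unfold s; ring).
      apply csum_ext. intros j _. rewrite csum_mult_r. reflexivity. }
    rewrite E1.
    assert (E2 : F 0%R = w s).
    { unfold F. rewrite Rminus_0_r. unfold n at 1. rewrite csum_shift.
      rewrite csum_zero.
      2: { intros j Hj. unfold G. rewrite csum_zero. ring.
           intros i Hi. rewrite Iwc by lia.
           destruct (Nat.eqb_spec i (n - 1)); [lia|]. ring. }
      unfold G. rewrite Nat.sub_0_r. unfold n at 1. simpl csum at 1.
      rewrite csum_zero.
      2: { intros i Hi. rewrite Iwc by lia.
           destruct (Nat.eqb_spec i (n - 1)); [unfold n in *; lia|]. ring. }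
      rewrite Iwc by (unfold n; lia).
      replace (Nat.eqb m (n - 1)) with true by (symmetry; apply Nat.eqb_eq; unfold n; lia).
      replace (m + 0 + 1)%nat with n by (unfold n; lia). rewrite hc. simpl. ring. }
    rewrite <- E2. symmetry. apply cd_zero_const.
    intros t.
    eapply cd_val.
    { apply (cd_csum n (fun j t => G j t * CDerive_n j w (s - t)%R)
               (fun j => H j t * CDerive_n j w (s - t)%R + G j t * (- CDerive_n (S j) w (s - t)%R))).
      intros j Hj. eapply cd_val. apply (cd_mult (G j) (fun t => CDerive_n j w (s - t)%R)).
      - unfold G. apply cd_csum. intros i Hi. apply cd_cmult. apply cd_of_Cn. apply Dwc. lia.
      - apply cd_opp_arg. apply cd_of_Cn. apply Dw. exact Hj.
      - reflexivity. }
    set (W := fun j => CDerive_n j w (s - t)%R).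
    set (A := fun j => H j t * W j).
    assert (HG : forall j, (j < n)%nat -> G j t = c (S j) * wc t + H (S j) t).
    { intros j Hj. unfold G, H.
      replace (n - j)%nat with (S (n - S j)) by lia. rewrite csum_shift.
      replace (0 + j + 1)%nat with (S j) by lia. simpl CDerive_n at 1. f_equal.
      apply csum_ext. intros i _. replace (S i + j + 1)%nat with (i + S j + 1)%nat by lia.
      reflexivity. }
    rewrite (csum_ext n _ (fun j => (A j - A (S j)) + (- wc t) * (c (S j) * W (S j)))).
    2: { intros j Hj. rewrite HG by exact Hj. unfold A, W. ring. }
    rewrite csum_plus, csum_tel, csum_scal.
    unfold W. rewrite (Dc_shift n c w (s - t)%R (HD _)).
    unfold A, H. rewrite Nat.sub_diag, Nat.sub_0_r. simpl csum at 2.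
    rewrite (csum_ext n _ (fun k => c (S k) * CDerive_n (S k) wc t)).
    2: { intros i _. replace (i + 0 + 1)%nat with (S i) by lia. reflexivity. }
    rewrite (Dc_shift n c wc t (HDwc t)). unfold W. simpl CDerive_n. ring.
Qed.
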